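(* Let $X$ be a set and $\{X_i\}_{i\in I}$ a family of subsets of $X$. Let $Y$ be the simplicial graph with vertex set $X$ in which two distinct points are adjacent iff some $X_i$ contains both. Suppose that (1) $Y$ has no infinite cliques; (2) any finite pairwise intersecting subfamily of $\{X_i\}$ has nonempty intersection; (3) for any pairwise intersecting $X_{i_1},X_{i_2},X_{i_3}$ there exists $X_{i_0}$ in the family with $(X_{i_1}\cap X_{i_2})\cup(X_{i_2}\cap X_{i_3})\cup(X_{i_3}\cap X_{i_1})\subseteq X_{i_0}$. Then $Y$ is finitely clique Helly.
   Context: A graph is finitely clique Helly if every finite pairwise intersecting family of maximal cliques (viewed as vertex sets) has nonempty intersection. *)

(* Defs.v *)
From mathcomp Require Import all_boot.
From mathcomp Require Export classical_sets cardinality.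
Set Implicit Arguments. Unset Strict Implicit. Unset Printing Implicit Defensive.
Local Open Scope classical_set_scope.

Definition fam_adj (X I : Type) (F : I -> set X) (x y : X) : Prop :=
  x <> y /\ exists i, F i x /\ F i y.

Definition is_clique (X : Type) (adj : X -> X -> Prop) (C : set X) : Prop :=
  forall x y, C x -> C y -> x <> y -> adj x y.

Definition is_max_clique (X : Type) (adj : X -> X -> Prop) (C : set X) : Prop :=
  is_clique adj C /\ (forall D, is_clique adj D -> C `<=` D -> D = C).

Definition pairwise_meet (X : Type) (Q : set (set X)) : Prop :=
  forall A B, Q A -> Q B -> exists x, A x /\ B x.

Definition fin_clique_helly (X : Type) (adj : X -> X -> Prop) : Prop :=
  forall Q : set (set X),
    finite_set Q -> Q !=set0 ->
    (forall C, Q C -> is_max_clique adj C) ->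
    pairwise_meet Q ->
    exists x, forall C, Q C -> C x.

(* Main.v *)
Require Import Defs.
From mathcomp Require Import all_boot classical_sets cardinality.
From mathcomp Require Import boolp.
Local Open Scope classical_set_scope.

Section Aux.
Variables (X I : Type) (F : I -> set X).
Hypothesis h3 : forall i1 i2 i3 : I,
     (exists x, F i1 x /\ F i2 x) -> (exists x, F i2 x /\ F i3 x) ->
     (exists x, F i3 x /\ F i1 x) ->
     exists i0, (F i1 `&` F i2) `|` (F i2 `&` F i3) `|` (F i3 `&` F i1)
                `<=` F i0.

Lemma drop_size (s : seq {classic X}) (x : {classic X}) :
  x \in s -> size [seq w <- s | w != x] < size s.
Proof.
move=> xs; rewrite size_filter -(count_predC (fun w => w != x) s).
rewrite -[X in X < _]addn0 ltn_add2l -has_count.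
by apply/hasP; exists x => //=; rewrite eqxx.
Qed.

Lemma mem_drop (s : seq {classic X}) (x w : {classic X}) :
  (w \in [seq w <- s | w != x]) <-> (w \in s /\ w <> x).
Proof.
rewrite mem_filter; split.
  by case/andP => /eqP ? ?.
by case=> ? /eqP ?; apply/andP.
Qed.

Lemma clique_sub n : forall s : seq {classic X}, size s <= n ->
  is_clique (fam_adj F) [set` s] ->
  (exists x y, (x \in s) /\ (y \in s) /\ x <> y) ->
  exists i, [set` s] `<=` F i.
Proof.
elim: n => [|n IH] s.
  by rewrite leqn0 => /nilP -> _ [x [y [/=]]].
move=> sz cl [x [y [xs [ys xy]]]].
case: (pselect (exists z, z \in s /\ z <> x /\ z <> y)) => [[z [zs [zx zy]]]|nz].
- have sub w (t := [seq w <- s | w != w]) : True by [].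
  have H (u v t : {classic X}) : u \in s -> v \in s -> t \in s ->
      u <> v -> v <> t -> u <> t ->
      exists i, [set` [seq w <- s | w != u]] `<=` F i.
    move=> us vs ts uv vt ut; apply: IH.
    + by have := leq_trans (drop_size _ _ us) sz; rewrite ltnS.
    + move=> a b /mem_drop [as_ _] /mem_drop [bs _] ab; exact: cl.
    + by exists v, t; rewrite !mem_drop; split; [|split] => //; split => // /esym.
  have [a Ha] := H x y z xs ys zs xy (fun e => zy (esym e)) (fun e => zx (esym e)).
  have [b Hb] := H y z x ys zs xs (fun e => zy (esym e)) zx (fun e => xy (esym e)).
  have [c Hc] := H z x y zs xs ys zx xy zy.
  have Hin (u v : {classic X}) : u \in s -> u <> v -> [set` [seq w <- s | w != v]] u.
    by move=> us uv; apply/mem_drop.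
  have [d Hd] := h3 a b c
    (ex_intro _ z (conj (Ha _ (Hin _ _ zs zx)) (Hb _ (Hin _ _ zs zy))))
    (ex_intro _ x (conj (Hb _ (Hin _ _ xs (fun e => xy e))) (Hc _ (Hin _ _ xs (fun e => zx (esym e))))))
    (ex_intro _ y (conj (Hc _ (Hin _ _ ys (fun e => zy (esym e)))) (Ha _ (Hin _ _ ys (fun e => xy (esym e)))))).
  exists d => w /= ws; apply: Hd.
  case: (pselect (w = x)) => [->|wx].
    by left; right; split; [apply: Hb; apply: Hin => // e; apply: xy e|apply: Hc; apply: Hin => // e; apply: zx (esym e)].
  case: (pselect (w = y)) => [->|wy].
    by right; split; [apply: Hc; apply: Hin => // e; apply: zy (esym e)|apply: Ha; apply: Hin => // e; apply: xy (esym e)].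
  by left; left; split; [apply: Ha|apply: Hb]; apply: Hin.
- have [_ [i [Fx Fy]]] := cl x y xs ys xy.
  exists i => w /= ws.
  case: (pselect (w = x)) => [->//|wx].
  case: (pselect (w = y)) => [->//|wy].
  by exfalso; apply: nz; exists w.
Qed.
End Aux.

Theorem lemma3p3 (X I : Type) (F : I -> set X) :
  (* (1) Y has no infinite cliques *)
  (forall C : set X, is_clique (fam_adj F) C -> finite_set C) ->
  (* (2) finite pairwise intersecting subfamilies have nonempty intersection *)
  (forall J : set I, finite_set J -> J !=set0 ->
     (forall i j, J i -> J j -> exists x, F i x /\ F j x) ->
     exists x, forall i, J i -> F i x) ->
  (* (3) triangle condition *)
  (forall i1 i2 i3 : I,
     (exists x, F i1 x /\ F i2 x) -> (exists x, F i2 x /\ F i3 x) ->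
     (exists x, F i3 x /\ F i1 x) ->
     exists i0, (F i1 `&` F i2) `|` (F i2 `&` F i3) `|` (F i3 `&` F i1)
                `<=` F i0) ->
  fin_clique_helly (fam_adj F).
Proof.
move=> h1 h2 h3 Q finQ [C0 QC0] Qmax Qmeet.
case: (pselect (exists C, Q C /\ ~ (exists x y, C x /\ C y /\ x <> y))).
  move=> [C [QC nC]].
  have [x [Cx _]] := Qmeet C C QC QC.
  exists x => D QD.
  have [y [Cy Dy]] := Qmeet C D QC QD.
  case: (pselect (y = x)) => [<-//|yx].
  by exfalso; apply: nC; exists y, x.
move=> all2.
have key C : Q C -> exists i, F i = C.
  move=> QC.
  have [clC maxC] := Qmax C QC.
  have /(@finite_seqP {classic X}) [s Cs] := h1 C clC.
  have two : exists x y, C x /\ C y /\ x <> y.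
    apply: contrapT => n2; apply: all2; by exists C.
  have [i Ci] : exists i, C `<=` F i.
    rewrite Cs; apply: (@clique_sub X I F h3 (size s) s (leqnn _)).
      by rewrite -Cs.
    by rewrite Cs in two.
  exists i; apply: maxC => //.
  move=> a b Fa Fb ab; split => //; by exists i.
have [i0 _] := key C0 QC0.
have ex C : exists i, Q C -> F i = C.
  case: (pselect (Q C)) => [QC|nQ].
    by have [i Hi] := key C QC; exists i.
  by exists i0.
have [f Hf] := choice ex.
have [x Hx] : exists x, forall i, (f @` Q) i -> F i x.
  apply: h2; first exact: finite_image.
    by exists (f C0), C0.
  move=> _ _ [C QC <-] [D QD <-].
  by rewrite (Hf C QC) (Hf D QD); apply: Qmeet.
exists x => C QC.
by rewrite -(Hf C QC); apply: Hx; exists C.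
Qed.
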